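(* Let $k\ge1$. Every $k$-primitive element $f\in\mathcal{A}$ can be written as a polynomial of degree at most $k$, with complex coefficients, in finitely many $1$-primitive elements of $\mathcal{A}$.
   Context: Let $G$ be an abelian group written additively with identity $e=0$ (in the paper, $G$ is the group, under pointwise addition, of finite complex linear combinations of characteristic functions of measurable subsets of a measurable set $H$). Let $\mathcal{A}$ be an algebra of complex-valued functions on $G$ (pointwise operations, containing the constants) such that for every $f\in\mathcal{A}$ there exist finitely many $f'_i,f''_i\in\mathcal{A}$ with $f(x+y)=\sum_i f'_i(x)f''_i(y)$ for all $x,y\in G$ (so that the coproduct $\Delta f(x,y)=f(x+y)$ makes $\mathcal{A}$ a commutative, cocommutative bialgebra with counit $\epsilon(f)=f(0)$; in the paper $\mathcal{A}$ is the algebra of smooth functions on $G$). Coderivatives: for $f\colon G\to\mathbb{C}$ define $(\mathcal{L}f)(x_0,x_1)=f(x_0+x_1)-f(x_0)$ and recursively $(\mathcal{L}^k f)(x_0,x_1,\dots,x_k)=(\mathcal{L}^{k-1}f)(x_0+x_1,x_2,\dots,x_k)-(\mathcal{L}^{k-1}f)(x_0,x_2,\dots,x_k)$. Write $(\mathcal{L}^kf)(e)$ for the function $(x_1,\dots,x_k)\mapsto(\mathcal{L}^kf)(0,x_1,\dots,x_k)$ on $G^k$; explicitly $(\mathcal{L}^kf)(e)(x_1,\dots,x_k)=\sum_{S\subseteq\{1,\dots,k\}}(-1)^{k-|S|}f\big(\sum_{i\in S}x_i\big)$. A function $f$ is called $k$-primitive if $(\mathcal{L}^r f)(e)=0$ for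 all $r>k$ while $(\mathcal{L}^k f)(e)\neq0$. In particular $f$ is $1$-primitive iff $f$ is nonconstant and $f(x+y)-f(x)-f(y)+f(0)=0$ for all $x,y$ (i.e. $f-f(0)$ is additive). *)

(* Defs.v *)
From HB Require Import structures.
From mathcomp Require Import all_boot all_order all_algebra.
From mathcomp Require Import complex.
From mathcomp Require Import reals.
From mathcomp Require Import mpoly.
Set Implicit Arguments. Unset Strict Implicit. Unset Printing Implicit Defensive.
Import Order.TTheory GRing.Theory Num.Theory.
Local Open Scope ring_scope.

(* Iterated coderivative, following the paper's recursion:
   (L^0 f)(x0) = f x0,
   (L^k f)(x0,x1,...,xk) = (L^{k-1} f)(x0+x1,x2,...,xk) - (L^{k-1} f)(x0,x2,...,xk).
   The arguments x1,x2,... are given as a sequence xs : nat -> G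
   (xs 0 = x1, xs 1 = x2, ...); only the first k entries are used. *)
Fixpoint coder (G : zmodType) (K : pzRingType) (k : nat) (f : G -> K)
  : G -> (nat -> G) -> K :=
  match k with
  | 0 => fun x0 _ => f x0
  | k'.+1 => fun x0 xs =>
      coder k' f (x0 + xs 0%N) (fun i => xs i.+1)
      - coder k' f x0 (fun i => xs i.+1)
  end.

Definition coder_e (G : zmodType) (K : pzRingType) (k : nat) (f : G -> K)
  (xs : nat -> G) : K := coder k f 0 xs.

Definition primitive (G : zmodType) (K : pzRingType) (k : nat) (f : G -> K) : Prop :=
  (forall r : nat, (k < r)%N -> forall xs : nat -> G, coder_e r f xs = 0)
  /\ (exists xs : nat -> G, coder_e k f xs != 0).

Definition coproduct_algebra (G : zmodType) (K : pzRingType) (A : (G -> K) -> Prop) : Prop :=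
  [/\ (forall c : K, A (fun _ => c)),
      (forall f g, A f -> A g -> A (fun x => f x + g x)),
      (forall f g, A f -> A g -> A (fun x => f x * g x)),
      (forall (c : K) f, A f -> A (fun x => c * f x))
    & (forall f, A f -> exists (n : nat) (f1 f2 : 'I_n -> G -> K),
          (forall i, A (f1 i)) /\ (forall i, A (f2 i)) /\
          (forall x y : G, f (x + y) = \sum_(i < n) f1 i x * f2 i y))].

(* Main.v *)
Require Import Defs.
From HB Require Import structures.
From mathcomp Require Import all_boot all_order all_algebra.
From mathcomp Require Import complex.
From mathcomp Require Import reals.
From mathcomp Require Import mpoly.
From mathcomp Require Import ring zify.
From Stdlib Require Import FunctionalExtensionality Classical.
Import Order.TTheory GRing.Theory Num.Theory.
Local Open Scope ring_scope.
Set Implicit Arguments. Unset Strict Implicit. Unset Printing Implicit Defensive.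

Definition allF (T : Type) (Q : T -> Prop) (s : seq T) : Prop :=
  foldr (fun a acc => Q a /\ acc) True s.

Lemma allF_map (T U : Type) (Q : U -> Prop) (g : T -> U) (s : seq T) :
  allF (fun a => Q (g a)) s -> allF Q (map g s).
Proof. by elim: s => //= a s IH [h1 h2]; split => //; apply: IH. Qed.

Lemma allF_impl (T : Type) (Q Q' : T -> Prop) (s : seq T) :
  (forall a, Q a -> Q' a) -> allF Q s -> allF Q' s.
Proof. by move=> hQ; elim: s => //= a s IH [h1 h2]; split; [apply: hQ|apply: IH]. Qed.

Section Evals.
Variable F : fieldType.
Variables (Y X : Type).
Variable H : Y -> X -> F.
Variable P : (Y -> F) -> Prop.
Hypothesis hP1 : forall a phi psi, P phi -> P psi -> P (fun y => phi y + a * psi y).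
Hypothesis hP2 : forall a phi, P phi -> P (fun y => a * phi y).

Definition md (phi : Y -> F) (y0 : Y) (c : F) (psi : Y -> F) : Y -> F :=
  fun y => psi y + (- (psi y0 / c)) * phi y.

Lemma sum_md (Z : Type) (W : Z -> F) phi y0 c (t : seq ((Y -> F) * Z)) y :
  \sum_(p <- map (fun p => (md phi y0 c p.1, p.2)) t) p.1 y * W p.2 =
  \sum_(p <- t) p.1 y * W p.2 - phi y / c * \sum_(p <- t) p.1 y0 * W p.2.
Proof.
rewrite big_map mulr_sumr -sumrB; apply: eq_bigr => p _ /=.
rewrite /md. ring.
Qed.

Lemma to_evals_aux n : forall (s : seq ((Y -> F) * (X -> F))) (t : seq ((Y -> F) * Y)),
  (size s <= n)%N -> allF (fun p => P p.1) s -> allF (fun p => P p.1) t ->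
  (forall y x, H y x = \sum_(p <- t) p.1 y * H p.2 x + \sum_(p <- s) p.1 y * p.2 x) ->
  exists t' : seq ((Y -> F) * Y), allF (fun p => P p.1) t' /\
    forall y x, H y x = \sum_(p <- t') p.1 y * H p.2 x.
Proof.
elim: n => [|n IH] [|[phi Rf] s] t //= hs hPs hPt E.
- by exists t; split => // y x; rewrite E big_nil addr0.
- by exists t; split => // y x; rewrite E big_nil addr0.
case: hPs => hphi hPs.
have [[y0 hy0]|hno] := classic (exists y0, phi y0 != 0).
  pose g := fun p : (Y -> F) * Y => (md phi y0 (phi y0) p.1, p.2).
  pose g' := fun p : (Y -> F) * (X -> F) => (md phi y0 (phi y0) p.1, p.2).
  apply: (IH (map g' s) ((fun y => (phi y0)^-1 * phi y, y0) :: map g t)).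
  - by rewrite size_map.
  - by apply: allF_map; move: hPs; apply: allF_impl => p hp; apply: hP1.
  - split; first exact: hP2.
    by apply: allF_map; move: hPt; apply: allF_impl => p hp; apply: hP1.
  - move=> y x.
    rewrite big_cons /= /g /g' (sum_md (fun z => H z x)) (sum_md (fun r => r x)).
    have Ey := E y x; have E0 := E y0 x.
    rewrite big_cons /= in Ey.
    rewrite big_cons /= in E0.
    rewrite Ey E0.
    by field.
apply: (IH s t) => // y x.
have hz : phi y = 0 by apply/eqP; apply: contra_notT hno => h; exists y.
by rewrite E big_cons /= hz mul0r add0r.
Qed.
End Evals.

Lemma to_evals (F : fieldType) (Y X : Type) (H : Y -> X -> F) (P : (Y -> F) -> Prop)
  (hP1 : forall a phi psi, P phi -> P psi -> P (fun y => phi y + a * psi y))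
  (hP2 : forall a phi, P phi -> P (fun y => a * phi y))
  (s : seq ((Y -> F) * (X -> F))) :
  allF (fun p => P p.1) s ->
  (forall y x, H y x = \sum_(p <- s) p.1 y * p.2 x) ->
  exists t' : seq ((Y -> F) * Y), allF (fun p => P p.1) t' /\
    forall y x, H y x = \sum_(p <- t') p.1 y * H p.2 x.
Proof.
move=> hs E; apply: (@to_evals_aux F Y X H P hP1 hP2 (size s) s [::]) => // y x.
by rewrite E big_nil add0r.
Qed.

Lemma big_allF_eq (F : nzRingType) (T : Type) (Q : T -> Prop) (r : seq T) (G1 G2 : T -> F) :
  allF Q r -> (forall p, Q p -> G1 p = G2 p) ->
  \sum_(p <- r) G1 p = \sum_(p <- r) G2 p.
Proof.
move=> h E; elim: r h => [|a r IH] /=; first by rewrite !big_nil.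
by case=> h1 h2; rewrite !big_cons E // IH.
Qed.

Section Coder.
Variable G : zmodType.
Variable K : comRingType.
Implicit Types (f g : G -> K) (xs : nat -> G).

Definition fcons (z : G) (s : nat -> G) : nat -> G :=
  fun i => match i with 0 => z | i'.+1 => s i' end.
Definition fdel (j : nat) (s : nat -> G) : nat -> G :=
  fun i => if (i < j)%N then s i else s i.+1.

Lemma coder_add k f g x0 xs :
  coder k (fun x => f x + g x) x0 xs = coder k f x0 xs + coder k g x0 xs.
Proof.
elim: k x0 xs => [//|k IH] x0 xs /=. rewrite !IH. ring.
Qed.

Lemma coder_sub k f g x0 xs :
  coder k (fun x => f x - g x) x0 xs = coder k f x0 xs - coder k g x0 xs.
Proof.
elim: k x0 xs => [//|k IH] x0 xs /=. rewrite !IH. ring.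
Qed.

Lemma coder_scale k (c : K) f x0 xs :
  coder k (fun x => c * f x) x0 xs = c * coder k f x0 xs.
Proof.
elim: k x0 xs => [//|k IH] x0 xs /=. rewrite !IH. ring.
Qed.

Lemma coder_zero k x0 xs : coder k (fun _ : G => (0:K)) x0 xs = 0.
Proof. elim: k x0 xs => [//|k IH] x0 xs /=. by rewrite !IH subrr. Qed.

Lemma coderS k f x0 xs : coder k.+1 f x0 xs =
  coder k f (x0 + xs 0%N) (fun i => xs i.+1) - coder k f x0 (fun i => xs i.+1).
Proof. by []. Qed.

Lemma coder_const k (c : K) x0 xs : coder k.+1 (fun _ : G => c) x0 xs = 0.
Proof.
elim: k x0 xs => [|k IH] x0 xs; first by rewrite /= subrr.
by rewrite coderS !IH subrr.
Qed.

Lemma coder_sum (I : Type) (r : seq I) (P : pred I) (F : I -> G -> K) k x0 xs :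
  coder k (fun x => \sum_(i <- r | P i) F i x) x0 xs =
  \sum_(i <- r | P i) coder k (F i) x0 xs.
Proof.
elim: r => [|a r IH].
  rewrite big_nil.
  have -> : (fun x => \sum_(i <- [::] | P i) F i x) = fun _ => 0.
    by apply: functional_extensionality => x; rewrite big_nil.
  exact: coder_zero.
rewrite big_cons.
have -> : (fun x => \sum_(i <- a :: r | P i) F i x) =
  fun x => if P a then F a x + \sum_(i <- r | P i) F i x else \sum_(i <- r | P i) F i x.
  by apply: functional_extensionality => x; rewrite big_cons.
case: (P a).
  by rewrite coder_add IH.
exact: IH.
Qed.

Lemma coder_trans k f y x0 xs :
  coder k (fun t => f (t + y)) x0 xs = coder k f (x0 + y) xs.
Proof.
elim: k x0 xs => [//|k IH] x0 xs /=. by rewrite !IH addrAC.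
Qed.

Lemma coder_cons k f x0 a s :
  coder k.+1 f x0 (fcons a s) = coder k f (x0 + a) s - coder k f x0 s.
Proof. by []. Qed.

Lemma coder_swap k f x0 a b s :
  coder k.+2 f x0 (fcons a (fcons b s)) = coder k.+2 f x0 (fcons b (fcons a s)).
Proof.
rewrite /=. set c := coder k f.
have -> : x0 + b + a = x0 + a + b by rewrite addrAC.
ring.
Qed.

Lemma fcons_eta (z : nat -> G) : fcons (z 0%N) (fun i => z i.+1) = z.
Proof. by apply: functional_extensionality => -[|i]. Qed.

Lemma fdel0 (z : nat -> G) : fdel 0 z = (fun i => z i.+1).
Proof. by apply: functional_extensionality => i; rewrite /fdel ltn0. Qed.

Lemma fdelS j (z : nat -> G) :
  fdel j.+1 z = fcons (z 0%N) (fdel j (fun i => z i.+1)).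
Proof. by apply: functional_extensionality => -[|i]. Qed.

Lemma coder_rot m j f x0 (z : nat -> G) : (j < m)%N ->
  coder m f x0 (fcons (z j) (fdel j z)) = coder m f x0 z.
Proof.
elim: j m f x0 z => [|j IH] m f x0 z hj.
  by rewrite fdel0 fcons_eta.
case: m hj => [//|[//|m]] hj.
rewrite fdelS coder_swap.
rewrite coder_cons.
rewrite (IH m.+1 f (x0 + z 0%N) (fun i => z i.+1)) //.
by rewrite (IH m.+1 f x0 (fun i => z i.+1)).
Qed.


Lemma coder_leibniz (u w : G -> K) (hu : forall a b, u (a + b) = u a + u b) m x0 zs :
  coder m (fun x => u x * w x) x0 zs =
  u x0 * coder m w x0 zs +
  \sum_(j < m) u (zs j) * coder m.-1 w (x0 + zs j) (fdel j zs).
Proof.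
elim: m x0 zs => [|m IH] x0 zs; first by rewrite big_ord0 addr0.
rewrite coderS !IH big_ord_recl fdel0 /=.
rewrite hu.
case: m IH => [|m] IH.
  by rewrite !big_ord0 /=; ring.
set s' := (fun i => zs i.+1).
have E : \sum_(i < m.+1) u (zs (bump 0 i)) *
    coder m.+1 w (x0 + zs (bump 0 i)) (fdel (bump 0 i) zs) =
  \sum_(j < m.+1) u (s' j) * coder m w (x0 + zs 0%N + s' j) (fdel j s') -
  \sum_(j < m.+1) u (s' j) * coder m w (x0 + s' j) (fdel j s').
  rewrite -sumrB; apply: eq_bigr => i _.
  rewrite /bump add1n fdelS coder_cons -mulrBr.
  by rewrite [x0 + zs 0%N + _]addrAC.
rewrite E /=. ring.
Qed.

End Coder.

Section Main.
Variable R : realType.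
Local Notation C := (R[i]).
Variable G : zmodType.
Variable A : (G -> C) -> Prop.
Hypothesis hA : coproduct_algebra A.

Lemma A_ext f g : (forall x, f x = g x) -> A f -> A g.
Proof. by move=> E; rewrite (functional_extensionality f g E). Qed.

Lemma A_const c : A (fun _ => c). Proof. by case: hA => h _ _ _ _; apply: h. Qed.
Lemma A_add f g : A f -> A g -> A (fun x => f x + g x). Proof. by case: hA => _ h _ _ _; apply: h. Qed.
Lemma A_mul f g : A f -> A g -> A (fun x => f x * g x). Proof. by case: hA => _ _ h _ _; apply: h. Qed.
Lemma A_scale c f : A f -> A (fun x => c * f x). Proof. by case: hA => _ _ _ h _; apply: h. Qed.
Lemma A_sub f g : A f -> A g -> A (fun x => f x - g x).
Proof.
move=> hf hg; apply: (@A_ext (fun x => f x + (-1) * g x)); last by apply: A_add => //; apply: A_scale.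
by move=> x; rewrite mulN1r.
Qed.

Lemma A_sumseq (T : Type) (r : seq T) (Fs : T -> G -> C) :
  allF (fun p => A (Fs p)) r -> A (fun x => \sum_(p <- r) Fs p x).
Proof.
elim: r => [|a r IH] /=.
  move=> _; apply: (@A_ext (fun _ => 0)); [by move=> x; rewrite big_nil | exact: A_const].
case=> h1 h2; apply: (@A_ext (fun x => Fs a x + \sum_(p <- r) Fs p x)).
  by move=> x; rewrite big_cons.
by apply: A_add => //; apply: IH.
Qed.

Lemma A_sumord n (Fs : 'I_n -> G -> C) :
  (forall i, A (Fs i)) -> A (fun x => \sum_(i < n) Fs i x).
Proof.
move=> h; apply: (A_sumseq (r := index_enum 'I_n)).
by elim: (index_enum 'I_n) => //= a r ->; split.
Qed.

Definition Tk k (f : G -> C) :=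
  forall r, (k < r)%N -> forall x0 xs, coder r f x0 xs = 0.

Lemma Tk_of_succ k f : (forall x0 xs, coder k.+1 f x0 xs = 0) -> Tk k f.
Proof.
move=> h r; elim: r => [//|r IH] hr x0 xs.
case: (ltngtP k r) => hkr.
- by rewrite coderS !IH // subrr.
- by move: hr; rewrite ltnS leqNgt hkr.
- by rewrite -hkr h.
Qed.

Lemma Tk_base k f x0 xs : Tk k f -> coder k f x0 xs = coder k f 0 xs.
Proof.
move=> h; have := h k.+1 (ltnSn k) 0 (fcons x0 xs).
by rewrite coder_cons add0r => /eqP; rewrite subr_eq0 => /eqP.
Qed.

Lemma Tk_of_e k f : (forall r, (k < r)%N -> forall xs, coder_e r f xs = 0) -> Tk k f.
Proof.
move=> h r hr x0 xs.
have := h r.+1 (leqW hr) (fcons x0 xs).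
rewrite /coder_e coder_cons add0r => E.
have := h r hr xs; rewrite /coder_e => E2.
by rewrite -(subrK (coder r f 0 xs) (coder r f x0 xs)) E E2 addr0.
Qed.

Definition additive_fun (u : G -> C) := forall a b, u (a + b) = u a + u b.

Lemma additive0 u : additive_fun u -> u 0 = 0.
Proof.
move=> h; have := h 0 0; rewrite addr0 => E.
by apply: (@addrI _ (u 0)); rewrite addr0 -E.
Qed.

Lemma additive_prim u : additive_fun u -> (exists a, u a != 0) -> primitive 1 u.
Proof.
move=> hu [a ha]; split.
  have T : Tk 1 u by apply: Tk_of_succ => x0 xs; rewrite /= !hu; ring.
  by move=> r hr xs; apply: T.
by exists (fun _ => a); rewrite /coder_e /= add0r additive0 // subr0.
Qed.


Inductive expr := EC of C | EV of nat | EAdd of expr & expr | EMul of expr & expr.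

Fixpoint edeg e : nat :=
  match e with EC _ => 0 | EV _ => 1 | EAdd a b => maxn (edeg a) (edeg b)
  | EMul a b => (edeg a + edeg b)%N end.

Fixpoint evalE (gs : seq (G -> C)) e (x : G) : C :=
  match e with EC c => c | EV i => nth (fun _ => 0) gs i x
  | EAdd a b => evalE gs a x + evalE gs b x
  | EMul a b => evalE gs a x * evalE gs b x end.

Fixpoint shiftE m e :=
  match e with EC c => EC c | EV i => EV (m + i)
  | EAdd a b => EAdd (shiftE m a) (shiftE m b)
  | EMul a b => EMul (shiftE m a) (shiftE m b) end.

Fixpoint clampE m e :=
  match e with EC c => EC c | EV i => if (i < m)%N then EV i else EC 0
  | EAdd a b => EAdd (clampE m a) (clampE m b)
  | EMul a b => EMul (clampE m a) (clampE m b) end.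

Lemma edeg_shift m e : edeg (shiftE m e) = edeg e.
Proof. by elim: e => //= a -> b ->. Qed.

Lemma edeg_clamp m e : (edeg (clampE m e) <= edeg e)%N.
Proof.
elim: e => //= [i|a ha b hb|a ha b hb]; first by case: ifP.
  by rewrite geq_max !leq_max ha hb orbT.
by apply: leq_add.
Qed.

Lemma eval_shift gs1 gs2 e x : evalE (gs1 ++ gs2) (shiftE (size gs1) e) x = evalE gs2 e x.
Proof.
elim: e => //= [i|a -> b ->|a -> b ->] //.
by rewrite nth_cat ltnNge leq_addr /= addKn.
Qed.

Lemma eval_clamp gs1 gs2 e x : evalE (gs1 ++ gs2) (clampE (size gs1) e) x = evalE gs1 e x.
Proof.
elim: e => //= [i|a -> b ->|a -> b ->] //.
case: ifP => hi /=; first by rewrite nth_cat hi.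
by rewrite nth_default // leqNgt hi.
Qed.

Definition GoodL (gs : seq (G -> C)) :=
  forall j, (j < size gs)%N -> A (nth (fun _ => 0) gs j) /\ primitive 1 (nth (fun _ => 0) gs j).

Definition InP d (F : G -> C) :=
  exists gs e, GoodL gs /\ (edeg e <= d)%N /\ forall x, F x = evalE gs e x.

Lemma InP_ext d F F' : (forall x, F x = F' x) -> InP d F -> InP d F'.
Proof. by move=> E [gs [e [h1 [h2 h3]]]]; exists gs, e; split=> //; split=> // x; rewrite -E. Qed.

Lemma InP_mono d d' F : (d <= d')%N -> InP d F -> InP d' F.
Proof. by move=> hd [gs [e [h1 [h2 h3]]]]; exists gs, e; split=> //; split=> //; apply: leq_trans hd. Qed.

Lemma InP_const c : InP 0 (fun _ => c).
Proof. by exists [::], (EC c); split. Qed.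

Lemma GoodL_cat gs1 gs2 : GoodL gs1 -> GoodL gs2 -> GoodL (gs1 ++ gs2).
Proof.
move=> h1 h2 j; rewrite size_cat nth_cat => hj.
case: ifP => hj1; first exact: h1.
by apply: h2; rewrite ltn_subLR // leqNgt hj1.
Qed.

Lemma InP_add d F1 F2 : InP d F1 -> InP d F2 -> InP d (fun x => F1 x + F2 x).
Proof.
move=> [gs1 [e1 [g1 [d1 E1]]]] [gs2 [e2 [g2 [d2 E2]]]].
exists (gs1 ++ gs2), (EAdd (clampE (size gs1) e1) (shiftE (size gs1) e2)).
split; first exact: GoodL_cat.
split; first by rewrite /= geq_max edeg_shift d2 andbT (leq_trans (edeg_clamp _ _)).
by move=> x /=; rewrite eval_clamp eval_shift E1 E2.
Qed.

Lemma InP_mul d1 d2 F1 F2 : InP d1 F1 -> InP d2 F2 -> InP (d1 + d2) (fun x => F1 x * F2 x).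
Proof.
move=> [gs1 [e1 [g1 [h1 E1]]]] [gs2 [e2 [g2 [h2 E2]]]].
exists (gs1 ++ gs2), (EMul (clampE (size gs1) e1) (shiftE (size gs1) e2)).
split; first exact: GoodL_cat.
split; first by rewrite /= edeg_shift leq_add // (leq_trans (edeg_clamp _ _)).
by move=> x /=; rewrite eval_clamp eval_shift E1 E2.
Qed.

Lemma InP_var g : A g -> primitive 1 g -> InP 1 g.
Proof.
move=> h1 h2; exists [:: g], (EV 0); split; last by split.
by case=> // _; split.
Qed.

Lemma InP_sumseq d (T : Type) (r : seq T) (Fs : T -> G -> C) :
  allF (fun p => InP d (Fs p)) r -> InP d (fun x => \sum_(p <- r) Fs p x).
Proof.
elim: r => [|a r IH] /=.
  move=> _; apply: (@InP_ext d (fun _ => 0)); first by move=> x; rewrite big_nil.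
  exact: InP_mono (InP_const 0).
case=> h1 h2; apply: (@InP_ext d (fun x => Fs a x + \sum_(p <- r) Fs p x)).
  by move=> x; rewrite big_cons.
by apply: InP_add => //; apply: IH.
Qed.

Lemma InP_additive u : A u -> additive_fun u -> InP 1 u.
Proof.
move=> hA1 hu; have [ex|nex] := classic (exists a, u a != 0).
  by apply: InP_var => //; apply: additive_prim.
apply: (@InP_ext 1 (fun _ => 0)); last exact: InP_mono (InP_const 0).
by move=> x; apply/esym/eqP; apply: contra_notT nex => h; exists x.
Qed.


Fixpoint toMP n e : {mpoly C[n]} :=
  match e with EC c => c%:MP
  | EV i => match (insub i : option 'I_n) with Some j => 'X_j | None => 0 end
  | EAdd a b => toMP n a + toMP n b
  | EMul a b => toMP n a * toMP n b end.

Lemma toMP_eval gs e x :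
  (toMP (size gs) e).@[fun j => nth (fun _ => 0) gs j x] = evalE gs e x.
Proof.
elim: e => /= [c|i|a ha b hb|a ha b hb].
- by rewrite mevalC.
- case: insubP => [j hj <-|hi]; first by rewrite mevalXU.
  by rewrite meval0 nth_default // leqNgt.
- by rewrite mevalD ha hb.
- by rewrite mevalM ha hb.
Qed.

Lemma toMP_size n e : (msize (toMP n e) <= (edeg e).+1)%N.
Proof.
elim: e => /= [c|i|a ha b hb|a ha b hb].
- by rewrite msizeC; case: (c != 0).
- case: insubP => [j _ _|_]; last by rewrite msize0.
  by rewrite msizeX mdeg1.
- apply: leq_trans (msizeD_le _ _) _.
  by rewrite geq_max !(leq_trans ha, leq_trans hb) // ltnS leq_max leqnn ?orbT.
- have [->|nza] := eqVneq (toMP n a) 0; first by rewrite mul0r msize0.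
  have [->|nzb] := eqVneq (toMP n b) 0; first by rewrite mulr0 msize0.
  rewrite msizeM //.
  by move: (leq_add ha hb); rewrite -subn1 leq_subLR add1n addSn addnS.
Qed.


Lemma coder_transL m (f : G -> C) y x0 xs :
  coder m (fun t => f (y + t)) x0 xs = coder m f (y + x0) xs.
Proof. elim: m x0 xs => [//|m IH] x0 xs /=. by rewrite !IH addrA. Qed.

Lemma allF_all (T : Type) (Q : T -> Prop) s : (forall a, Q a) -> allF Q s.
Proof. by move=> h; elim: s => //= a s ->; split. Qed.

Lemma main_ind k : forall f, A f -> Tk k f -> InP k f.
Proof.
elim: k => [|k IH] f hfA hT.
  apply: (@InP_ext 0 (fun _ => f 0)); last exact: InP_const.
  by move=> x; have := Tk_base x (fun _ => 0) hT.
case: hA => _ _ _ _ hcop.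
have [n [f1 [f2 [hf1 [hf2 hdec]]]]] := hcop f hfA.
pose H := fun (y : G) (xs : nat -> G) => coder k.+1 f 0 (fcons y xs).
have Lcop : forall y xs, coder k f y xs = \sum_(i < n) f1 i y * coder k (f2 i) 0 xs.
  move=> y xs.
  have -> : coder k f y xs = coder k f (y + 0) xs by rewrite addr0.
  rewrite -coder_transL.
  have -> : (fun t => f (y + t)) = (fun t => \sum_(i < n) f1 i y * f2 i t).
    by apply: functional_extensionality => t; rewrite hdec.
  rewrite coder_sum; apply: eq_bigr => i _; exact: coder_scale.
have Hdec : forall y xs, H y xs = \sum_(i < n) (f1 i y - f1 i 0) * coder k (f2 i) 0 xs.
  move=> y xs; rewrite /H coder_cons add0r !Lcop -sumrB; apply: eq_bigr => i _.
  by rewrite mulrBl.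
have Hadd : forall xs, additive_fun (fun y => H y xs).
  move=> xs a b; rewrite /H !coder_cons !add0r.
  have := Tk_base a (fcons b xs) hT; rewrite !coder_cons add0r => E.
  have E' : coder k f (a + b) xs = coder k f b xs - coder k f 0 xs + coder k f a xs.
    by rewrite -E subrK.
  rewrite E'; ring.
have HA : forall xs, A (fun y => H y xs).
  move=> xs; apply: (@A_ext (fun y => \sum_(i < n) coder k (f2 i) 0 xs * (f1 i y - f1 i 0))).
    by move=> y; rewrite Hdec; apply: eq_bigr => i _; rewrite mulrC.
  apply: A_sumord => i; apply: A_scale; apply: A_sub => //; exact: A_const.
have E1 : forall xs y, H y xs = \sum_(p <- [seq ((fun xs => coder k (f2 i) 0 xs),
      (fun y => f1 i y - f1 i 0)) | i <- index_enum 'I_n]) p.1 xs * p.2 y.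
  by move=> xs y; rewrite big_map Hdec; apply: eq_bigr => i _ /=; rewrite mulrC.
have [t1 [_ Et1]] := @to_evals C (nat -> G) G (fun xs y => H y xs) (fun _ => True)
   (fun _ _ _ _ _ => I) (fun _ _ _ => I) _ (allF_all _ (fun _ => I)) E1.
pose P2 := fun u => A u /\ additive_fun u.
have hP1 : forall a phi psi, P2 phi -> P2 psi -> P2 (fun y => phi y + a * psi y).
  move=> a phi psi [h1 h2] [h3 h4]; split; first by apply: A_add => //; apply: A_scale.
  by move=> x y; rewrite h2 h4; ring.
have hP2 : forall a phi, P2 phi -> P2 (fun y => a * phi y).
  move=> a phi [h1 h2]; split; first by apply: A_scale.
  by move=> x y; rewrite h2; ring.
have E2 : forall y xs, H y xs = \sum_(p <- [seq ((fun y => H y p.2), p.1) | p <- t1]) p.1 y * p.2 xs.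
  by move=> y xs; rewrite big_map Et1; apply: eq_bigr => p _ /=; rewrite mulrC.
have all2 : allF (fun p => P2 p.1) [seq ((fun y => H y p.2), p.1) | p <- t1].
  by apply: allF_map; apply: allF_all => p; split; [apply: HA | apply: Hadd].
have [t2 [ht2 Et2]] := @to_evals C G (nat -> G) H P2 hP1 hP2 _ all2 E2.
pose w := fun (y0 z : G) => f (z + y0) - f z.
have wA : forall y0, A (w y0).
  move=> y0; apply: A_sub => //.
  apply: (@A_ext (fun z => \sum_(i < n) f2 i y0 * f1 i z)).
    by move=> z; rewrite hdec; apply: eq_bigr => i _; rewrite mulrC.
  by apply: A_sumord => i; apply: A_scale.
have wcod : forall y0 r x0 xs, coder r (w y0) x0 xs = coder r.+1 f x0 (fcons y0 xs).
  by move=> y0 r x0 xs; rewrite coder_sub coder_trans coder_cons.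
have wT : forall y0, Tk k (w y0).
  by move=> y0 r hr x0 xs; rewrite wcod; apply: hT.
have wH : forall y0 xs, coder k (w y0) 0 xs = H y0 xs by move=> *; rewrite wcod.
pose q := fun z => \sum_(p <- t2) p.1 z * w p.2 z.
have Cq : forall x0 xs, coder k.+1 q x0 xs = k.+1%:R * coder k.+1 f 0 xs.
  move=> x0 xs; rewrite /q coder_sum.
  rewrite (@big_allF_eq _ _ (fun p => P2 p.1) t2 _
     (fun p => \sum_(j < k.+1) p.1 (xs j) * H p.2 (fdel j xs))) //; last first.
    move=> p [_ hadd]; rewrite coder_leibniz // (wT _ k.+1 (ltnSn k)) mulr0 add0r /=.
    by apply: eq_bigr => j _; rewrite (Tk_base _ _ (wT p.2)) wH.
  rewrite exchange_big /=.
  rewrite (eq_bigr (fun j => coder k.+1 f 0 xs)); last first.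
    by move=> j _; rewrite -Et2 /H coder_rot.
  by rewrite sumr_const card_ord mulr_natl.
have Tr : Tk k (fun z => f z - (k.+1%:R)^-1 * q z).
  apply: Tk_of_succ => x0 xs.
  rewrite coder_sub coder_scale Cq (Tk_base _ _ hT).
  by rewrite mulrA mulVf ?mul1r ?subrr // pnatr_eq0.
have qA : A q.
  by apply: A_sumseq; apply: allF_impl ht2 => p [hpA _]; apply: A_mul.
have Ir := IH _ (A_sub hfA (A_scale _ qA)) Tr.
have Iq : InP k.+1 q.
  apply: InP_sumseq; apply: allF_impl ht2 => p [hpA hpadd].
  exact: InP_mul (InP_additive hpA hpadd) (IH _ (wA p.2) (wT p.2)).
apply: (@InP_ext _ (fun z => (f z - (k.+1%:R)^-1 * q z) + (k.+1%:R)^-1 * q z)).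
  by move=> z; rewrite subrK.
apply: InP_add; first exact: InP_mono Ir.
exact: InP_mul (InP_const _) Iq.
Qed.

End Main.

Unset Implicit Arguments.
Set Strict Implicit.

Theorem mainTheorem2 (R : realType) (G : zmodType) (A : (G -> R[i]) -> Prop)
  (hA : coproduct_algebra A) (k : nat) (hk : (1 <= k)%N)
  (f : G -> R[i]) (hfA : A f) (hf : primitive k f) :
  exists (n : nat) (g : 'I_n -> G -> R[i]) (p : {mpoly R[i][n]}),
    (forall j, A (g j) /\ primitive 1 (g j)) /\
    (msize p <= k.+1)%N /\
    (forall x : G, f x = p.@[fun j => g j x]).
Proof.
have hT := Tk_of_e (proj1 hf).
have [gs [e [hg [hd he]]]] := main_ind hA hfA hT.
exists (size gs), (fun j => nth (fun _ => 0) gs j), (toMP (size gs) e).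
split; first by move=> j; apply: hg.
split; first by apply: leq_trans (toMP_size _ _) _; rewrite ltnS.
by move=> x; rewrite he toMP_eval.
Qed.
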